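(* Let $\alpha<_c\beta$ with $\beta/\!\!/\alpha$ an nc border strip with $n$ boxes, and let $w\in CRHW_n$ satisfy $w(\alpha)=\beta$. If $j\in SE(\beta/\!\!/\alpha)$, then $j\notin\mathrm{leg}(w)$.
   Context: A composition is a finite sequence $\alpha=(\alpha_1,\dots,\alpha_k)$ of positive integers; $\ell(\alpha)=k$; its diagram is the set of boxes $(i,j)$, $1\le i\le\ell(\alpha)$, $1\le j\le\alpha_i$, rows top to bottom, columns left to right. For compositions $\gamma=(\gamma_1,\dots,\gamma_l)$, $\delta$ write $\gamma\lessdot_c\delta$ if $\delta=(1,\gamma_1,\dots,\gamma_l)$ or $\delta=(\gamma_1,\dots,\gamma_k+1,\dots,\gamma_l)$ with $\gamma_i\ne\gamma_k$ for all $i<k$; $<_c$ is the transitive closure. For $\gamma<_c\delta$, $\delta/\!\!/\gamma$ consists of the boxes of $\delta$ other than $(\ell(\delta)-\ell(\gamma)+i,j)$, $1\le i\le\ell(\gamma)$, $1\le j\le\gamma_i$. $\mathrm{supp}(\beta/\!\!/\alpha)$ is the set of columns containing a box of $\beta/\!\!/\alpha$; interval shape: supp is a set of consecutive integers. nc border strip: an interval shape such that (1) if $(i,1),(i,2)\in\beta/\!\!/\alpha$ then $(i,1)$ is the bottommost box of column 1 of $\beta/\!\!/\alpha$, and (2) if $(i,j),(i,j+1)\in\beta/\!\!/\alpha$ with $j\ge2$ then $(i,j)$ is the topmost box of column $j$ of $\beta/\!\!/\alpha$. $E(\beta/\!\!/\alpha)$ is the set of $j$ such that $(i,j),(i,j+1)\in\beta/\!\!/\alpha$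 for some $i$; $SE(\beta/\!\!/\alpha)$ is the set of $j\notin E(\beta/\!\!/\alpha)$ for which there are boxes $(i,j),(i',j+1)\in\beta/\!\!/\alpha$ with $i'>i$. Box-adding operators: $\mathfrak t_1(\alpha)=(1,\alpha_1,\dots,\alpha_k)$; for $i\ge2$, $\mathfrak t_i(\alpha)$ increases the leftmost part equal to $i-1$ by $1$, and is $0$ if none; $\mathfrak t_i(0)=0$. A word $w=\mathfrak t_{i_1}\cdots\mathfrak t_{i_n}$ acts by $w(\alpha)=\mathfrak t_{i_1}(\cdots\mathfrak t_{i_n}(\alpha))$; it is a reverse $k$-hookword if $i_1\le\cdots\le i_{k+1}>i_{k+2}>\cdots>i_n$, with $\mathrm{leg}(w)=\{i_{k+1},\dots,i_n\}$; connected if $\{i_1,\dots,i_n\}$ is a set of consecutive integers; $CRHW_n$ is the set of connected reverse hookwords of length $n$. *)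

(* Defs.v *)
From Stdlib Require Import Relations.
From mathcomp Require Import all_boot.
Set Implicit Arguments. Unset Strict Implicit. Unset Printing Implicit Defensive.

Definition composition (a : seq nat) : bool := all (fun x => 0 < x) a.

Definition cover_c (g d : seq nat) : Prop :=
  d = 1 :: g \/
  exists k, k < size g /\
    d = set_nth 0 g k (nth 0 g k).+1 /\
    (forall i, i < k -> nth 0 g i <> nth 0 g k).

Definition lt_c : relation (seq nat) := clos_trans (seq nat) cover_c.

(* Box (i,j) (1-indexed rows top to bottom, columns left to right) of the
   skew shape b // a. *)
Definition inskew (b a : seq nat) (i j : nat) : bool :=
  [&& 1 <= i <= size b, 1 <= j <= nth 0 b i.-1 &
      ~~ ((size b - size a < i) && (j <= nth 0 a (i - (size b - size a)).-1))].

Definition skew_boxes (b a : seq nat) : seq (nat * nat) :=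
  [seq ij <- [seq (i, j) | i <- iota 1 (size b), j <- iota 1 (nth 0 b i.-1)]
   | inskew b a ij.1 ij.2].

Definition in_supp (b a : seq nat) (j : nat) : Prop := exists i, inskew b a i j.

Definition interval_shape (b a : seq nat) : Prop :=
  forall j1 j2 j3, j1 <= j2 -> j2 <= j3 ->
    in_supp b a j1 -> in_supp b a j3 -> in_supp b a j2.

Definition nc_border_strip (b a : seq nat) : Prop :=
  interval_shape b a /\
  (forall i, inskew b a i 1 -> inskew b a i 2 ->
     forall i', inskew b a i' 1 -> i' <= i) /\
  (forall i j, 2 <= j -> inskew b a i j -> inskew b a i j.+1 ->
     forall i', inskew b a i' j -> i <= i').

Definition inE (b a : seq nat) (j : nat) : Prop :=
  exists i, inskew b a i j /\ inskew b a i j.+1.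

Definition inSE (b a : seq nat) (j : nat) : Prop :=
  ~ inE b a j /\
  exists i i', i < i' /\ inskew b a i j /\ inskew b a i' j.+1.

(* Box-adding operators; None plays the role of 0. *)
Definition t_op (i : nat) (a : seq nat) : option (seq nat) :=
  match i with
  | 0 => None
  | 1 => Some (1 :: a)
  | i'.+1 =>
      let k := find (pred1 i') a in
      if k < size a then Some (set_nth 0 a k i) else None
  end.

(* w = t_{i1} ... t_{in} acts by applying t_{in} first. *)
Definition word_act (w : seq nat) (a : seq nat) : option (seq nat) :=
  foldr (fun i o => obind (t_op i) o) (Some a) w.

Definition rev_hookword (k : nat) (w : seq nat) : Prop :=
  k < size w /\ sorted leq (take k.+1 w) /\ sorted (fun x y => y < x) (drop k w).

Definition leg (k : nat) (w : seq nat) : seq nat := drop k w.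

Definition connected_word (w : seq nat) : Prop :=
  forall x y z, x \in w -> z \in w -> x <= y -> y <= z -> y \in w.

Definition CRHW (n : nat) (w : seq nat) : Prop :=
  size w = n /\ all (fun i => 0 < i) w /\ connected_word w /\
  exists k, rev_hookword k w.

(* Main.v *)
Require Import Defs.
From Stdlib Require Import Relations.
From mathcomp Require Import all_boot.
From mathcomp Require Import zify.
Set Implicit Arguments. Unset Strict Implicit. Unset Printing Implicit Defensive.

Definition F (s : seq nat) (p : nat) : nat := nth 0 (rev s) p.

Fixpoint run (u : seq nat) (s : seq nat) : option (seq nat) :=
  match u with
  | [::] => Some s
  | c :: u' => match t_op c s with Some s1 => run u' s1 | None => None end
  end.

Lemma run_rcons u c s : run (rcons u c) s = obind (t_op c) (run u s).
Proof.
elim: u s => [|x u IH] s /=; first by case: (t_op c s).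
by case: (t_op x s).
Qed.

Lemma word_act_run w a : word_act w a = run (rev w) a.
Proof.
elim: w => [|c w IH] //=.
by rewrite rev_cons run_rcons -IH.
Qed.

Lemma run_cat u1 u2 s : run (u1 ++ u2) s = obind (run u2) (run u1 s).
Proof.
elim: u1 s => [|x u IH] s //=.
by case: (t_op x s).
Qed.

Lemma F_default s p : size s <= p -> F s p = 0.
Proof. by move=> h; rewrite /F nth_default // size_rev. Qed.

Lemma t_op_spec c s s' : t_op c s = Some s' ->
  0 < c /\ size s <= size s' /\ exists q, F s q = c.-1 /\
  (1 < c -> forall p, q < p -> F s p <> c.-1) /\ (c = 1 -> q = size s) /\
  forall p, F s' p = if p == q then c else F s p.
Proof.
case: c => [|[|c]] //=.
  move=> [<-]; split=> //; split; first by rewrite /= leqnSn.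
  exists (size s); split; first by rewrite F_default.
  split=> //; split=> // p.
  rewrite /F rev_cons nth_rcons size_rev.
  case: (ltngtP p (size s)) => h.
  - by [].
  - by rewrite nth_default // size_rev ltnW.
  - by [].
case: ifP => // hk [<-]; set k := find _ s in hk *.
have hsz : size (set_nth 0 s (k) c.+2) = size s.
  by rewrite size_set_nth; apply/maxn_idPr.
split=> //; split; first by rewrite hsz.
exists (size s - (k).+1); split.
  rewrite /F nth_rev; last by lia.
  have -> : size s - (size s - (k).+1).+1 = k by lia.
  by apply/eqP; rewrite /k; apply: (nth_find 0 (a := pred1 c.+1)); rewrite has_find.
split.
  move=> _ p hp; case: (ltnP p (size s)) => hps; last by rewrite F_default.
  rewrite /F nth_rev ?size_rev // => he.
  have hlt : size s - p.+1 < k by lia.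
  have : (pred1 c.+1) (nth 0 s (size s - p.+1)) = false by apply: before_find hlt.
  by rewrite /= he eqxx.
split=> // p.
case: (ltnP p (size s)) => hps; last first.
  rewrite !F_default ?hsz //; case: eqP => // hq; lia.
rewrite /F !nth_rev ?size_rev ?hsz // nth_set_nth /=.
have -> : (size s - p.+1 == k) = (p == size s - (k).+1).
  apply/eqP/eqP; lia.
by [].
Qed.

Definition P0 j (A f : nat -> nat) :=
  forall p, (j.-1 <= A p -> f p = A p) /\ (A p < j.-1 -> f p <= j.-1).
Definition Q j (A : nat -> nat) r (f : nat -> nat) :=
  (A r < j <= f r) /\ (forall p, r < p -> f p <> j.-1) /\
  (forall p, r < p -> A p < j -> f p < j) /\
  (f r = j -> forall p, p < r -> A p <= j -> f p <= j).
Definition Q4 j (A : nat -> nat) r (f : nat -> nat) :=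
  (A r < j <= f r) /\
  (forall p, r < p -> A p < j -> f p < j) /\
  (f r = j -> forall p, p < r -> A p <= j -> f p <= j).

Section Steps.
Variables (j : nat) (A : nat -> nat).

Lemma P0_step c q (f g : nat -> nat) : 0 < c -> c < j -> f q = c.-1 ->
  (forall p, g p = if p == q then c else f p) -> P0 j A f -> P0 j A g.
Proof.
move=> c0 cj hq hg H p; rewrite hg; case: eqP => [->|_]; last exact: H.
have := H q; lia.
Qed.

Lemma Q_init r (f g : nat -> nat) : 2 <= j -> P0 j A f -> f r = j.-1 ->
  (forall p, r < p -> f p <> j.-1) ->
  (forall p, g p = if p == r then j else f p) -> Q j A r g.
Proof.
move=> j2 H hr hl hg; split; [|split; [|split]].
- rewrite hg eqxx; have := H r; lia.
- move=> p hp; rewrite hg; case: eqP => [e|_]; [lia| exact: hl].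
- move=> p hp hA; rewrite hg; case: eqP => [e|_]; first lia.
  have := H p; have := hl p hp; lia.
- move=> _ p hp hA; rewrite hg; case: eqP => [e|_]; first lia.
  have := H p; lia.
Qed.

Lemma Q_step r c q (f g : nat -> nat) : 2 <= j -> j <= c -> f q = c.-1 ->
  (1 < c -> forall p, q < p -> f p <> c.-1) ->
  (forall p, g p = if p == q then c else f p) -> Q j A r f -> Q j A r g.
Proof.
move=> j2 jc hq hl hg [ha [hb [hc hd]]]; split; [|split; [|split]].
- rewrite hg; case: eqP => _; lia.
- move=> p hp; rewrite hg; case: eqP => [e|_]; [lia| exact: hb].
- move=> p hp hA; rewrite hg; case: eqP => [e|_]; last exact: hc.
  subst p; have := hb q hp; have := hc q hp hA; lia.
- rewrite hg; case: eqP => [e|ne] hr p hp hA; first (subst q; lia).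
  rewrite hg; case: eqP => [e|_]; last exact: hd.
  subst p; have := hd hr q hp hA; case: (ltngtP c j.+1) => hcj; try lia.
  have c1 : 1 < c by lia.
  have := hl c1 r hp; lia.
Qed.

Lemma Q_Q4 r f : Q j A r f -> Q4 j A r f.
Proof. by move=> [ha [_ [hc hd]]]. Qed.

Lemma Q4_step r c q (f g : nat -> nat) : 0 < c -> c < j -> f q = c.-1 ->
  (forall p, g p = if p == q then c else f p) -> Q4 j A r f -> Q4 j A r g.
Proof.
move=> c0 cj hq hg [ha [hc hd]].
have qr : q != r by apply/eqP => e; subst q; lia.
split; [|split].
- by rewrite hg (negbTE (negbT (introF eqP (fun e => (elimN eqP qr) (esym e))))).
- move=> p hp hA; rewrite hg; case: eqP => [e|_]; [lia| exact: hc].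
- rewrite hg ifN_eq; last by rewrite eq_sym.
  move=> hr p hp hA; rewrite hg; case: eqP => [e|_]; [lia| exact: hd].
Qed.

End Steps.

Definition R2 (A : nat -> nat) r (f : nat -> nat) :=
  (A r < 1 <= f r) /\
  (f r = 1 -> (forall p, r < p -> f p = 0) /\ forall p, p != r -> A p < 2 -> f p < 2).
Definition R3 (A : nat -> nat) r (f : nat -> nat) :=
  (A r < 1 <= f r) /\ (f r = 1 -> forall p, p != r -> A p < 2 -> f p < 2).

Lemma R_init (A g : nat -> nat) r : (forall p, r <= p -> A p = 0) ->
  (forall p, g p = if p == r then 1 else A p) -> R2 A r g.
Proof.
move=> h0 hg; split.
  rewrite hg eqxx h0 //.
move=> _; split.
  move=> p hp; rewrite hg; case: eqP => [e|_]; [lia| apply: h0; lia].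
move=> p /negbTE hp hA; rewrite hg hp; lia.
Qed.

Lemma R2_step (A f g : nat -> nat) r c q : 1 < c -> f q = c.-1 ->
  (1 < c -> forall p, q < p -> f p <> c.-1) ->
  (forall p, g p = if p == q then c else f p) -> R2 A r f -> R2 A r g.
Proof.
move=> c1 hq hl hg [ha he]; split.
  rewrite hg; case: eqP => _; lia.
rewrite hg; case: eqP => [e|ne] hr; first lia.
have [h0 h2] := he hr.
have qr : q < r.
  case: (ltngtP q r) => // h; [have := h0 q h; lia | by case: ne].
split.
  move=> p hp; rewrite hg; case: eqP => [e|_]; [lia| exact: h0].
move=> p hpr hA; rewrite hg; case: eqP => [e|_]; last exact: h2.
subst p; case: (ltngtP c 2) => hc2; try lia.
  have := h2 q hpr; lia.
have := hl c1 r qr; lia.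
Qed.

Lemma R3_step (A f g : nat -> nat) r c q : 0 < c -> c < 2 -> f q = c.-1 ->
  (forall p, g p = if p == q then c else f p) -> R3 A r f -> R3 A r g.
Proof.
move=> c0 c1 hq hg [ha he].
have qr : r != q by apply/eqP => e; subst q; lia.
split; first by rewrite hg (negbTE qr).
rewrite hg (negbTE qr) => hr p hp hA; rewrite hg; case: eqP => [e|_]; [lia| exact: he].
Qed.

Lemma run_inv (P : pred nat) (I : seq nat -> Prop) u s s' : all P u ->
  (forall c s s', P c -> t_op c s = Some s' -> I s -> I s') ->
  I s -> run u s = Some s' -> I s'.
Proof.
move=> hu hs; elim: u s hu => [|c u IH] s /=; first by move=> _ Is [<-].
case/andP=> hc hu Is; case e: (t_op c s) => [s1|] // hr.
exact: IH hu (hs _ _ _ hc e Is) hr.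
Qed.

Lemma run_phase (I J : seq nat -> Prop) j Y s s' :
  sorted (fun x y => y <= x) Y ->
  (forall c s s', j <= c -> t_op c s = Some s' -> I s -> I s') ->
  (forall s, I s -> J s) ->
  (forall c s s', c < j -> t_op c s = Some s' -> J s -> J s') ->
  I s -> run Y s = Some s' -> J s'.
Proof.
move=> hY hI hIJ hJ; elim: Y s hY => [|c Y IH] s /=.
  by move=> _ Is [<-]; apply: hIJ.
move=> hp Is; case e: (t_op c s) => [s1|] // hr.
case: (leqP j c) => hjc.
  exact: IH (path_sorted hp) (hI _ _ _ hjc e Is) hr.
have hall : all (fun y => y <= c) Y.
  by apply: (order_path_min (leT := fun x y => y <= x)) hp => x y z h1 h2; apply: leq_trans h2 h1.
apply: (run_inv (P := fun y => y < j)) _ _ (hJ _ _ _ hjc e (hIJ _ Is)) hr.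
  by apply: sub_all hall => y hy; apply: leq_ltn_trans hy hjc.
exact: hJ.
Qed.

Lemma split_sorted (j : nat) (s : seq nat) : sorted ltn s -> j \in s ->
  exists u1 X, s = u1 ++ j :: X /\ all (fun y => y < j) u1 /\ all (fun y => j < y) X.
Proof.
elim: s => [|x s IH] //= hp; rewrite in_cons.
case: eqP => [-> _|ne /= hj].
  by exists [::], s; split=> //; split=> //; apply: order_path_min ltn_trans hp.
have [u1 [X [e [h1 h2]]]] := IH (path_sorted hp) hj.
have hall := order_path_min ltn_trans hp.
rewrite e all_cat /= in hall.
exists (x :: u1), X; rewrite e; split=> //; split=> //=.
rewrite h1 andbT; move: hall => /andP[_ /andP[]] //.
Qed.

Lemma inskewE b a i j : size a <= size b -> inskew b a i j =
  [&& 0 < i <= size b, 0 < j, F a (size b - i) < j & j <= F b (size b - i)].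
Proof.
move=> hab; rewrite /inskew.
case: (boolP (0 < i <= size b)) => //= /andP[i0 ib].
have hb : nth 0 b i.-1 = F b (size b - i).
  by rewrite /F nth_rev; [congr nth; lia | lia].
rewrite hb.
case: (ltnP (size b - size a) i) => h /=.
  have ha : nth 0 a (i - (size b - size a)).-1 = F a (size b - i).
    by rewrite /F nth_rev; [congr nth; lia | lia].
  rewrite ha -ltnNge; case: (0 < j); case: (j <= F b _); by rewrite ?andbF ?andbT.
rewrite (@F_default a); last by lia.
by case: (0 < j); case: (j <= F b _).
Qed.

Lemma E_at b a r j : size a <= size b -> F a r < j -> j.+1 <= F b r -> Defs.inE b a j.
Proof.
move=> hab ha hb.
have rb : r < size b.
  case: (ltnP r (size b)) => // h; rewrite F_default in hb => //.
exists (size b - r).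
have e : size b - (size b - r) = r by lia.
rewrite !inskewE // e; split; apply/and4P; split; try apply/andP; try split; lia.
Qed.

Lemma final2 b a r j : Q4 j (F a) r (F b) -> size a <= size b -> inSE b a j -> False.
Proof.
move=> [ha [hc hd]] hab [hnE [i [i' [hii' [h1 h2]]]]].
rewrite !inskewE // in h1 h2.
case/and4P: h1 => /andP[i0 ib] j0 ha1 hb1.
case/and4P: h2 => /andP[i0' ib'] _ ha2 hb2.
have pr : size b - i <= r.
  case: (leqP (size b - i) r) => // h; have := hc _ h ha1; lia.
case: (eqVneq (F b r) j) => e.
  have := hd e (size b - i') ltac:(lia) ltac:(lia); lia.
apply: hnE; apply: (E_at (r := r)) => //; lia.
Qed.

Lemma final1 b a r : R3 (F a) r (F b) -> size a <= size b -> inSE b a 1 -> False.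
Proof.
move=> [ha he] hab [hnE [i [i' [hii' [h1 h2]]]]].
rewrite !inskewE // in h2.
case/and4P: h2 => /andP[i0' ib'] _ ha2 hb2.
case: (eqVneq (F b r) 1) => e.
  case: (eqVneq (size b - i') r) => e2.
    rewrite e2 in hb2; lia.
  have := he e _ e2 ha2; lia.
apply: hnE; apply: (E_at (r := r)) => //; lia.
Qed.

Theorem mainTheorem13 (alpha beta : seq nat) (n : nat) (w : seq nat) (j : nat) :
  composition alpha -> composition beta ->
  lt_c alpha beta ->
  nc_border_strip beta alpha ->
  size (skew_boxes beta alpha) = n ->
  CRHW n w ->
  word_act w alpha = Some beta ->
  inSE beta alpha j ->
  forall k, rev_hookword k w -> j \notin leg k w.
Proof.
move=> _ _ _ _ _ _ hw hSE k [hksz [hs1 hs2]]; apply/negP => hj.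
rewrite word_act_run in hw.
have hab : size alpha <= size beta.
  apply: (run_inv (P := predT) (I := fun s => size alpha <= size s)) hw => //.
    exact: all_predT.
  move=> c s s' _ e hs; have [_ [h _]] := t_op_spec e; exact: leq_trans hs h.
rewrite /leg in hj.
have hrev : rev w = rev (drop k w) ++ rev (take k w) by rewrite -rev_cat cat_take_drop.
have sD : sorted ltn (rev (drop k w)) by rewrite rev_sorted.
have sY : sorted (fun x y => y <= x) (rev (take k w)).
  rewrite rev_sorted; rewrite -(take_takel w (leqnSn k)); exact: take_sorted.
have [u1 [X [eD [hu1 hX]]]] := split_sorted sD (etrans (mem_rev _ _) hj).
rewrite hrev eD -catA cat_cons run_cat in hw.
case e1: (run u1 alpha) => [s0|]; rewrite e1 //= in hw.
case e2: (t_op j s0) => [s1|]; rewrite e2 //= run_cat in hw.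
case e3: (run X s1) => [s2|]; rewrite e3 //= in hw.
have [j0 [_ [r [hr [hlast [h1 hupd]]]]]] := t_op_spec e2.
set A := F alpha.
case: (ltngtP j 1) => hj1; first lia.
-
  have P0s0 : P0 j A (F s0).
    apply: (run_inv (P := fun y => y < j) (I := fun s => P0 j A (F s))) e1 => //.
      move=> c s s' hc e hs; have [c0 [_ [q [hq [_ [_ hg]]]]]] := t_op_spec e.
      exact: (P0_step c0 hc hq hg hs).
    by move=> p; split=> [//|h]; apply: ltnW.
  have Qs1 : Q j A r (F s1).
    exact: (Q_init hj1 P0s0 hr (hlast hj1) hupd).
  have Qs2 : Q j A r (F s2).
    apply: (run_inv (P := fun y => j <= y) (I := fun s => Q j A r (F s))) e3 => //.
      by apply: sub_all hX => y; apply: ltnW.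
    move=> c s s' hc e hs; have [c0 [_ [q [hq [hl [_ hg]]]]]] := t_op_spec e.
    exact: (Q_step hj1 hc hq hl hg hs).
  have Q4b : Q4 j A r (F beta).
    apply: (run_phase (j := j) (I := fun s => Q j A r (F s)) (J := fun s => Q4 j A r (F s)) sY _ _ _ Qs2 hw).
    + move=> c s s' hc e hs; have [c0 [_ [q [hq [hl [_ hg]]]]]] := t_op_spec e.
      exact: (Q_step hj1 hc hq hl hg hs).
    + by move=> s; apply: Q_Q4.
    + move=> c s s' hc e hs; have [c0 [_ [q [hq [_ [_ hg]]]]]] := t_op_spec e.
      exact: (Q4_step c0 hc hq hg hs).
  exact: final2 Q4b hab hSE.
-
  subst j.
  have es0 : s0 = alpha.
    apply: (run_inv (P := fun y => y < 1) (I := fun s => s = alpha)) e1 => //.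
    move=> c s s' hc e _; have [c0 _] := t_op_spec e; lia.
  subst s0.
  have hr1 : r = size alpha by apply: h1.
  have R2s1 : R2 A r (F s1).
    apply: (R_init (A := A)) hupd => p hp; apply: F_default; lia.
  have R2s2 : R2 A r (F s2).
    apply: (run_inv (P := fun y => 1 < y) (I := fun s => R2 A r (F s))) e3 => //.
    move=> c s s' hc e hs; have [c0 [_ [q [hq [hl [_ hg]]]]]] := t_op_spec e.
    exact: (R2_step hc hq hl hg hs).
  have R3b : R3 A r (F beta).
    apply: (run_phase (j := 2) (I := fun s => R2 A r (F s)) (J := fun s => R3 A r (F s)) sY _ _ _ R2s2 hw).
    + move=> c s s' hc e hs; have [c0 [_ [q [hq [hl [_ hg]]]]]] := t_op_spec e.
      exact: (R2_step hc hq hl hg hs).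
    + by move=> s [ha he]; split=> // hr'; have [_ h] := he hr'.
    + move=> c s s' hc e hs; have [c0 [_ [q [hq [_ [_ hg]]]]]] := t_op_spec e.
      exact: (R3_step c0 hc hq hg hs).
  exact: final1 R3b hab hSE.

Qed.
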